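(* Let $T \subseteq \mathbb{Z}_2^\omega$ be a thin set. Then there exists a maximal (with respect to inclusion) thin set $T_0 \subseteq \mathbb{Z}_2^\omega$ such that $T \subseteq T_0$. Moreover, for every equivalence class $Q$ of the relation $\sim$ on $\mathbb{Z}_2^\omega$, the set $T_0 \cap Q$ is a maximal thin subset of $Q$.
   Context: $\mathbb{Z}_2^\omega$ is the set of all infinite binary sequences indexed by $\omega=\{0,1,2,\dots\}$. The Hamming distance is $\mathrm{hd}(x,y)=|\{k : x(k)\neq y(k)\}|\in\omega\cup\{\omega\}$, and $x\sim y$ iff $\mathrm{hd}(x,y)$ is finite. A set $T\subseteq \mathbb{Z}_2^\omega$ is thin if for every $n\in\omega$ the restriction to $T$ of the projection $x\mapsto x|_{\omega\setminus\{n\}}$ is injective (equivalently, no two distinct elements of $T$ differ in exactly one coordinate). *)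

(* Defs.v *)
From Stdlib Require Import List.

Definition seq2 := nat -> bool.
Definition subset2 := seq2 -> Prop.

Definition incl2 (A B : subset2) : Prop := forall x, A x -> B x.

(* x ~ y : finite Hamming distance, i.e. they differ on a finite set of coordinates *)
Definition hsim (x y : seq2) : Prop :=
  exists l : list nat, forall k, x k <> y k -> In k l.

(* T is thin: for every n, the projection forgetting coordinate n is injective on T *)
Definition thin (T : subset2) : Prop :=
  forall (n : nat) (x y : seq2), T x -> T y ->
    (forall k, k <> n -> x k = y k) -> x = y.

Definition maximal_thin_in (A T0 : subset2) : Prop :=
  incl2 T0 A /\ thin T0 /\
  forall S, incl2 S A -> thin S -> incl2 T0 S -> incl2 S T0.

Definition everything : subset2 := fun _ => True.

Definition hclass (x : seq2) : subset2 := fun y => hsim x y.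

Definition inter2 (A B : subset2) : subset2 := fun x => A x /\ B x.

(* Main.v *)
Require Import Defs.
From Stdlib Require Import List Classical.
From mathcomp Require Import all_boot.
From mathcomp Require Import boolp classical_sets.

Local Open Scope classical_set_scope.

Lemma adj_hsim (n : nat) (x y : seq2) :
  (forall k, k <> n -> x k = y k) -> hsim x y.
Proof.
move=> H; exists (n :: nil) => k Hk; left.
by case: (PeanoNat.Nat.eq_dec n k) => // /nesym /H.
Qed.

Lemma hsim_trans x y z : hsim x y -> hsim y z -> hsim x z.
Proof.
move=> [l1 H1] [l2 H2]; exists (l1 ++ l2) => k Hk; apply/in_or_app.
case: (Bool.bool_dec (x k) (y k)) => E.
- by right; apply: H2; rewrite -E.
- by left; apply: H1.
Qed.

Theorem proposition3 (T : subset2) :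
  thin T ->
  exists T0 : subset2,
    incl2 T T0 /\
    maximal_thin_in everything T0 /\
    (forall x : seq2, maximal_thin_in (hclass x) (inter2 T0 (hclass x))).
Proof.
move=> thT.
pose P := fun A : set seq2 => thin (fun x => T x \/ A x).
have [A [PA Amax]] : exists A, P A /\ forall B, A `<` B -> ~ P B.
  apply: Zorn_bigcup => F FP Ftot n x y Hx Hy Hxy.
  case: Hx => [Tx|[X FX Xx]]; case: Hy => [Ty|[Y FY Yy]].
  - exact: (thT n).
  - by apply: (FP Y FY n) => //; [left|right].
  - by apply: (FP X FX n) => //; [right|left].
  - case: (Ftot X Y FX FY) => XY.
    + by apply: (FP Y FY n) => //; right => //; apply: XY.
    + by apply: (FP X FX n) => //; right => //; apply: XY.
pose T0 := fun x => T x \/ A x.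
have max0 : maximal_thin_in everything T0.
  split; first by [].
  split; first exact: PA.
  move=> S _ thS T0S x Sx.
  apply: NNPP => nT0x.
  apply: (Amax S).
  - split; first by move=> z Az; apply: T0S; right.
    move=> SA; apply: nT0x; right; exact: SA.
  - move=> n u v Hu Hv; apply: (thS n).
    + by case: Hu => // Tu; apply: T0S; left.
    + by case: Hv => // Tv; apply: T0S; left.
exists T0; split; first by move=> z Tz; left.
split; first exact: max0.
move=> x; case: max0 => _ [th0 mx0].
split; first by move=> z [].
split.
  by move=> n u v [Hu _] [Hv _]; apply: (th0 n).
move=> S Sx thS T0S z Sz.
have Hz : hclass x z := Sx z Sz.
split; last exact: Hz.
apply: (mx0 (fun w => S w \/ T0 w)); [by []| | |by left].
- move=> n u v Hu Hv Huv.
  case: Hu => [Su|T0u]; case: Hv => [Sv|T0v].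
  + exact: (thS n).
  + have hv : hclass x v.
      apply: hsim_trans (Sx u Su) _; exact: (adj_hsim n).
    by apply: (thS n) => //; apply: T0S.
  + have hu : hclass x u.
      apply: hsim_trans (Sx v Sv) _; apply: (adj_hsim n) => k Hk.
      by rewrite Huv.
    by apply: (thS n) => //; apply: T0S.
  + exact: (th0 n).
- by move=> w T0w; right.
Qed.
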